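(* Let $a\geq 3$ and $m\geq 2a^2-a+2$ be integers, and suppose $[C(m,a)]$ is colored with red and blue so that there is no monochromatic solution of $L(m,a)$ in $[C(m,a)]$, with both $a-2$ and $a-1$ red. Then $1$ is red.
   Context: For integers $m\geq 3$, $a\geq 1$, $L(m,a)$ denotes the equation $x_1+x_2+\cdots+x_{m-1}=a x_m$. For a positive integer $n$, $[n]=\{1,\dots,n\}$. A solution of $L(m,a)$ in $[n]$ is an $m$-tuple $(x_1,\dots,x_m)\in[n]^m$ (entries not necessarily distinct) satisfying the equation; given a 2-coloring of $[n]$, it is monochromatic if all $x_i$ have the same color. $C(m,a)$ denotes $\left\lceil \frac{m-1}{a}\left\lceil \frac{m-1}{a}\right\rceil\right\rceil$. *)

(* Defs.v *)
From mathcomp Require Import all_boot.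
Set Implicit Arguments. Unset Strict Implicit. Unset Printing Implicit Defensive.

Definition ceil_div (p q : nat) : nat := (p + q - 1) %/ q.

(* C(m,a) = ceil( (m-1)/a * ceil((m-1)/a) ) = ceil( (m-1)*ceil((m-1)/a) / a ) *)
Definition Cma (m a : nat) : nat := ceil_div ((m - 1) * ceil_div (m - 1) a) a.

(* x : 'I_m -> nat is a solution of L(m,a) in [n]:
   x_1 + ... + x_{m-1} = a x_m, all entries in {1..n}.
   Index i : 'I_m corresponds to x_{i+1}; the last index ord_max-like is m-1. *)
Definition is_solution (m a n : nat) (x : 'I_m -> nat) : Prop :=
  (forall i, 1 <= x i <= n) /\
  \sum_(i < m | i.+1 < m) x i = a * (\sum_(i < m | i.+1 == m) x i).

(* coloring c : nat -> bool (true = red, false = blue); monochromatic *)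
Definition monochromatic (m : nat) (c : nat -> bool) (x : 'I_m -> nat) : Prop :=
  forall i j : 'I_m, c (x i) = c (x j).

(* Main.v *)
Require Import Defs.
From mathcomp Require Import all_boot zify.

Lemma sum_lt m (g : nat -> nat) : \sum_(i < m.+1 | i.+1 < m.+1) g i = \sum_(i < m) g i.
Proof.
rewrite big_mkcond big_ord_recr /= ltnn addn0.
by apply: eq_bigr => i _; rewrite ltnS ltn_ord.
Qed.

Lemma sum_eq m (g : nat -> nat) : \sum_(i < m.+1 | i.+1 == m.+1) g i = g m.
Proof.
rewrite big_mkcond big_ord_recr /= eqxx big1 // => i _.
by rewrite eqSS ltn_eqF.
Qed.

Lemma sum_two n p u v : \sum_(i < n) (if i < p then u else v) = minn p n * u + (n - p) * v.
Proof.
elim: n => [|n IH]; first by rewrite big_ord0 minn0 sub0n.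
rewrite big_ord_recr /= IH; case: ltnP => h.
- have -> : minn p n.+1 = n.+1 by lia.
  have -> : n.+1 - p = 0 by lia.
  have -> : n - p = 0 by lia.
  rewrite mulSn; lia.
- have -> : minn p n.+1 = p by lia.
  rewrite subSn // mulSn; lia.
Qed.

Lemma sol3 n a C (c : nat -> bool) t p u v (col : bool) :
  (forall x : 'I_n.+1 -> nat, @is_solution n.+1 a C x -> ~ monochromatic c x) ->
  1 <= u <= C -> 1 <= v <= C -> 1 <= t <= C ->
  c u = col -> c v = col -> c t = col ->
  p <= n -> p * u + (n - p) * v = a * t -> False.
Proof.
move=> H hu hv ht cu cv ct hp hs.
pose g := fun k : nat => if k.+1 == n.+1 then t else if k < p then u else v.
apply: (H (fun i => g i)); first split.
- move=> i; rewrite /g; case: ifP => _ //; case: ifP => _ //.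
- rewrite (sum_lt n g) (sum_eq n g) /g eqxx.
  rewrite (eq_bigr (fun i : 'I_n => if i < p then u else v)); last first.
    by move=> i _; rewrite eqSS ltn_eqF.
  rewrite sum_two.
  have -> : minn p n = p by lia.
  exact: hs.
- have K : forall k : 'I_n.+1, c (g k) = col.
    by move=> k; rewrite /g; case: ifP => _ //; case: ifP => _.
  move=> i j /=; transitivity col; [exact: K | symmetry; exact: K].
Qed.
Lemma arith a n d r : 3 <= a -> 2*(a*a) - a + 2 <= n.+1 ->
  n - 1 = d * (a*(a-1)) + r -> r < a*(a-1) ->
  [/\ a*d + a <= n + 1, n*(a-2) <= a*(n + 1 - a - a*d) & a*(n + 1 - a - a*d + d) <= n*(a-1)].
Proof.
move=> ha hn hd hr.
set B := a*(a-1) in hd hr *.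
have eB : a*a = B + a by rewrite /B mulnBr muln1; lia.
have hB : 2*a <= B by rewrite /B [a*(a-1)]mulnC leq_mul2r; lia.
have eBd : a*(a*d) = B*d + a*d by rewrite mulnA eB mulnDl.
have h1 : n <= B*(d+1) by rewrite mulnDr muln1; lia.
have h2 : a*(a*d) + B <= 2*n.
  rewrite eBd; case: (leqP d 1) => hd1.
    have : a*d <= a by rewrite -[X in _ <= X]muln1 leq_mul2l hd1 orbT.
    lia.
  have : a*d <= B*(d-1).
    apply: leq_trans (_ : (2*a)*(d-1) <= _); last by apply: leq_mul.
    rewrite [2*a]mulnC -mulnA leq_mul2l; lia.
  rewrite mulnBr muln1 -(mulnC d B).
  have : B <= d*B by rewrite leq_pmull; lia.
  move: (d*B) hd h1 => X; lia.
have h3 : a*d + a <= n + 1.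
  have : 3*(a*d + (a-1)) <= a*(a*d + (a-1)) by rewrite leq_mul2r; lia.
  have ee : a*(a*d + (a-1)) = a*(a*d) + B by rewrite mulnDr.
  rewrite ee; move: h2 hB; move: (a*(a*d)) => Z; lia.
have e1 : a*(n+1-a-a*d) + a*a + a*(a*d) = a*(n+1) by rewrite -!mulnDr; congr (a*_); lia.
rewrite mulnDr muln1 in e1.
have e2 : n*(a-2) + 2*n = a*n by rewrite [2*n]mulnC -mulnDr mulnC; congr (_*_); lia.
have e3 : n*(a-1) + n = a*n by rewrite -{2}[n]muln1 -mulnDr mulnC; congr (_*_); lia.
have e4 : a*(n+1-a-a*d+d) = a*(n+1-a-a*d) + a*d by rewrite mulnDr.
split => //.
  move: e1 e2 h2; rewrite eBd eB; move: (a*(n+1-a-a*d)) (n*(a-2)) (a*n) (B*d) (a*d) => P Q R S T; lia.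
rewrite e4; move: e1 e3 h1; rewrite eBd eB mulnDr muln1; move: (a*(n+1-a-a*d)) (n*(a-1)) (a*n) (B*d) (a*d) => P Q R S T; lia.
Qed.

Theorem lemma5 (m a : nat) (c : nat -> bool) :
  3 <= a ->
  2 * a ^ 2 - a + 2 <= m ->
  (forall x : 'I_m -> nat, @is_solution m a (Cma m a) x -> ~ monochromatic c x) ->
  c (a - 2) = true ->
  c (a - 1) = true ->
  c 1 = true.
Proof.
move=> ha hm H c2 c1.
case c1v: (c 1) => //.
case: m hm H => [|n] hm H; first by change (a^2) with (a*a) in hm; lia.
change (a^2) with (a*a) in hm.
have a0 : 0 < a by lia.
move: H; rewrite /Cma subn1 /=.
set e := ceil_div n a.
have he : n <= e * a.
  have := divn_eq (n + a - 1) a; have := ltn_pmod (n + a - 1) a0.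
  rewrite /e /ceil_div; move: ((n + a - 1) %/ a * a) => Y; lia.
set C := ceil_div (n * e) a => H.
have hC : forall y, y * a <= n * e -> y <= C.
  move=> y hy; rewrite /C /ceil_div leq_divRL //; lia.
have hea : a - 1 <= e.
  rewrite -(leq_pmul2r a0); apply: leq_trans he; rewrite mulnC.
  apply: leq_trans (_ : 2*(a*a) - a + 1 <= _); last by lia.
  rewrite mulnBr muln1.
  have : a <= a*a by rewrite leq_pmulr.
  lia.
have hCt : forall t, a * t <= n * (a - 1) -> t <= C.
  move=> t ht; apply: hC; rewrite mulnC; apply: leq_trans ht _.
  by rewrite leq_mul2l hea orbT.
have hna : a <= n.
  apply: leq_trans (_ : a*a <= _); first by rewrite leq_pmulr.
  lia.
have hC1 : a - 1 <= C.
  apply: hCt; rewrite leq_mul2r; lia.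
have blue : forall t, n * (a-2) <= a * t -> a * t <= n * (a-1) -> c t = false.
  move=> t h1 h2.
  have t1 : 1 <= t.
    case: t h1 {h2} => [|t] //; rewrite muln0.
    have : 1 <= a - 2 by lia.
    by rewrite -(leq_pmul2l (_ : 0 < n)) ?muln1; lia.
  case ct: (c t) => //; exfalso.
  pose p := a * t - n * (a - 2).
  have e21 : a - 1 = (a - 2) + 1 by lia.
  have hp : p <= n.
    rewrite /p; move: h2; rewrite e21 mulnDr muln1; lia.
  apply: (@sol3 n a C c t p (a-1) (a-2) true H) => //.
  - by rewrite hC1; lia.
  - rewrite (leq_trans _ hC1) //; lia.
  - by rewrite t1 hCt.
  - by rewrite e21 mulnDr muln1 addnAC -mulnDl subnKC // /p subnKC.
have := divn_eq (n - 1) (a * (a - 1)).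
have hB0 : 0 < a * (a - 1) by rewrite muln_gt0; lia.
have := ltn_pmod (n - 1) hB0.
move: ((n - 1) %/ (a * (a - 1))) ((n - 1) %% (a * (a - 1))) => d r hr hd.
have [f1 f2 f3] := @arith a n d r ha hm hd hr.
set t1 := n + 1 - a - a * d in f2 f3.
have f4 : a * t1 <= n * (a - 1).
  apply: leq_trans f3; by rewrite leq_mul2l leq_addr orbT.
have f5 : n * (a - 2) <= a * (t1 + d).
  apply: leq_trans f2 _; by rewrite leq_mul2l leq_addr orbT.
have b1 := blue t1 f2 f4.
have b0 := blue (t1 + d) f5 f3.
have t1p : 1 <= t1.
  case: (t1) f2 => [|k] //; rewrite muln0.
  have : 1 <= a - 2 by lia.
  by rewrite -(leq_pmul2l (_ : 0 < n)) ?muln1; lia.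
exfalso; apply: (@sol3 n a C c (t1 + d) (a - 1) t1 1 false H) => //.
- by rewrite t1p hCt.
- by rewrite (leq_trans _ hC1) //; lia.
- by rewrite addn_gt0 t1p hCt.
- lia.
- rewrite muln1 mulnDr.
  have E : a * t1 = (a - 1) * t1 + t1 by rewrite -{3}[t1]mul1n -mulnDl subnK //; lia.
  have F : t1 + a * d + a = n + 1 by rewrite /t1; lia.
  rewrite E; clearbody t1; move: ((a - 1) * t1) (a * d) F f1 => X Y; lia.
Qed.
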